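(* Let $k=(k_s)_{s\geq1}$ be a sequence of nonnegative integers and $l=(l_s)$, $m=(m_s)$ sequences with values in $\mathbb{Z}_{\geq2}\cup\{\infty\}$ and $\mathbb{Z}_{\geq1}\cup\{\infty\}$ respectively, such that $2k_s<m_s$ for all $s$. Let $\Delta=\Delta(k,l,m)$ be the subgroup of $\prod_s \mathbb{Z}/m_s\mathbb{Z}\wr D_{l_s}$ generated (and marked) by the three sequences $\tau=(\tau_s)$, $\alpha=(\alpha_s)$, $\beta=(\beta_s)$, where $\tau_s=(+1,\mathbb{1})$, $\alpha_s=(0,a_s\delta_0)$, $\beta_s=(0,b_s\delta_{k_s})$. If $R<\frac{\min_s k_s-1}{2}$, then the marked balls of radius $R$ in $\Delta$ and in $\Gamma(0,2,\infty)$ coincide. Moreover, if the sequence $k$ is unbounded, then $\Gamma(0,2,\infty)$ is a marked quotient of $\Delta$.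
   Context: $D_l=\langle a,b\mid a^2=b^2=(ab)^l=1\rangle$ is the dihedral group of order $2l$ ($D_\infty$ infinite dihedral); $a_s,b_s$ denote these generators in $D_{l_s}$. The wreath product $B\wr L$ has elements $(g,f)$, $g\in B$, $f:B\to L$ finitely supported, with $B$ acting by shift; $\mathbb{1}$ is the trivial function and $c\,\delta_g$ the function equal to $c$ at $g$, trivial elsewhere; $\mathbb{Z}/\infty\mathbb{Z}=\mathbb{Z}$. $\Gamma(0,2,\infty)$ is $\mathbb{Z}\wr D_2$ marked by $(+1,\mathbb{1}),(0,a\delta_0),(0,b\delta_0)$. Marked balls of radius $R$ in two groups marked by ordered triples coincide if a word of length at most $2R$ in the free group on three letters is trivial in one iff it is trivial in the other. A marked group $G$ is a marked quotient of $H$ if the map sending the $i$-th marked generator of $H$ to that of $G$ extends to a surjective homomorphism. *)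

(* Defs.v *)
From mathcomp Require Import all_boot all_order all_algebra.
Set Implicit Arguments. Unset Strict Implicit. Unset Printing Implicit Defensive.
Import Order.TTheory GRing.Theory Num.Theory.
Local Open Scope ring_scope.

(** Values in Z_{>=1} u {oo}: [Some n] is n, [None] is infinity. *)
Definition extnat := option nat.

(** The modulus used to represent Z/xZ inside int: n for [Some n], and 0 for
    infinity (Z/0Z = Z; note (z %% 0)%Z = z). *)
Definition emod (x : extnat) : int := if x is Some n then n%:Z else 0.

(** ** The dihedral group D_l = <a,b | a^2 = b^2 = (ab)^l = 1>, l in Z_{>=2} u {oo}.
    Concrete model: the pair (i, e) stands for r^i a^e with r = ab,
    i taken modulo l (i in Z when l = oo).  One has a r a = r^{-1}. *)
Definition dih := (int * bool)%type.

Definition dih_one : dih := (0, false).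

Definition dih_mul (l : extnat) (x y : dih) : dih :=
  (((x.1 + (if x.2 then - y.1 else y.1)) %% emod l)%Z, x.2 (+) y.2).

Definition dih_inv (l : extnat) (x : dih) : dih :=
  if x.2 then ((x.1 %% emod l)%Z, true) else (((- x.1) %% emod l)%Z, false).

(** generators: a = r^0 a, b = a r = r^{-1} a *)
Definition dih_a : dih := (0, true).
Definition dih_b (l : extnat) : dih := (((-1) %% emod l)%Z, true).

Definition dih_trivial (l : extnat) (x : dih) : Prop :=
  (x.1 %% emod l)%Z = 0 /\ x.2 = false.

(** An element (g, f) has g in Z/mZ (an int
    taken modulo m) and f : Z/mZ -> D_l, represented as an m-periodic function
    on int. *)
Definition wr := (int * (int -> dih))%type.

Definition wr_one : wr := (0, fun _ => dih_one).

Definition wr_mul (l m : extnat) (u v : wr) : wr :=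
  (((u.1 + v.1) %% emod m)%Z, fun x => dih_mul l (u.2 x) (v.2 (x - u.1))).

Definition wr_inv (l m : extnat) (u : wr) : wr :=
  (((- u.1) %% emod m)%Z, fun x => dih_inv l (u.2 (x + u.1))).

Definition wr_trivial (l m : extnat) (u : wr) : Prop :=
  (u.1 %% emod m)%Z = 0 /\ forall x : int, dih_trivial l (u.2 x).

Definition wr_delta (m : extnat) (c : dih) (j : int) : int -> dih :=
  fun x => if ((x - j) %% emod m)%Z == 0 then c else dih_one.

Definition gen_tau (m : extnat) : wr := ((1 %% emod m)%Z, fun _ => dih_one).
Definition gen_alpha (m : extnat) : wr := (0, wr_delta m dih_a 0).
Definition gen_beta (k : nat) (l m : extnat) : wr := (0, wr_delta m (dih_b l) k%:Z).

Definition gen (k : nat) (l m : extnat) (i : 'I_3) : wr :=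
  match val i with
  | 0 => gen_tau m
  | 1 => gen_alpha m
  | _ => gen_beta k l m
  end.

(** ** Words in the free group on three letters: a letter is (i, inverted?). *)
Definition word := seq ('I_3 * bool).

Definition letter_eval (k : nat) (l m : extnat) (p : 'I_3 * bool) : wr :=
  if p.2 then wr_inv l m (gen k l m p.1) else gen k l m p.1.

Definition word_eval (k : nat) (l m : extnat) (w : word) : wr :=
  foldr (fun p acc => wr_mul l m (letter_eval k l m p) acc) wr_one w.

(** A marked group is encoded by its set of trivial words. *)
Definition marked := word -> Prop.

Definition W (k : nat) (l m : extnat) : marked :=
  fun w => wr_trivial l m (word_eval k l m w).

Definition Delta (k : nat -> nat) (l m : nat -> extnat) : marked :=
  fun w => forall s, W (k s) (l s) (m s) w.

Definition Gamma0 : marked := W 0 (Some 2%N) None.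

(** G is a marked quotient of H: the generator map extends to a (necessarily
    surjective) homomorphism H -> G, i.e. every relation of H holds in G. *)
Definition marked_quotient (G H : marked) : Prop := forall w, H w -> G w.

(* Main.v *)
Require Import Defs.
From mathcomp Require Import all_boot all_order all_algebra.
From mathcomp Require Import zify ring lra.
Import Order.TTheory GRing.Theory Num.Theory.
Set Implicit Arguments. Unset Strict Implicit. Unset Printing Implicit Defensive.
Local Open Scope ring_scope.

Fixpoint evs (w : word) : seq (int * bool) :=
  if w is p :: w' then
    match val p.1 with
    | 0%N => [seq (e.1 + (if p.2 then -1 else 1), e.2) | e <- evs w']
    | 1%N => (0, false) :: evs w'
    | _ => (0, true) :: evs w'
    end
  else [::].

Fixpoint tsum (w : word) : int :=
  if w is p :: w' then
    (if val p.1 == 0%N then (if p.2 then -1 else 1) else 0) + tsum w'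
  else 0.

Definition cg (M x y : int) := ((x %% M)%Z == (y %% M)%Z).
Definition cnt (t : bool) (M y : int) (w : word) :=
  count (fun e => (e.2 == t) && cg M y e.1) (evs w).

Lemma cgE M x y : cg M x y = (M %| x - y)%Z.
Proof. exact: eqz_mod_dvd. Qed.

Lemma cg_trans M x y z : cg M x y -> cg M y z -> cg M x z.
Proof. by rewrite /cg => /eqP H1 /eqP H2; apply/eqP; rewrite H1 H2. Qed.

Lemma cg_sym M x y : cg M x y = cg M y x.
Proof. by rewrite /cg eq_sym. Qed.

Lemma cg_sub M x y z : cg M (x - z) y = cg M x (y + z).
Proof. by rewrite !cgE; have -> : x - z - y = x - (y + z) by ring. Qed.

Lemma cg_refl M x : cg M x x.
Proof. by rewrite /cg. Qed.

Lemma cg_mod M x : cg M (x %% M)%Z x.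
Proof. by rewrite /cg modz_mod. Qed.

Lemma cg0 x y : cg 0 x y = (x == y).
Proof. by rewrite /cg !modz0. Qed.

Lemma delta_cg M x j : (((x - j) %% M)%Z == 0) = cg M x j.
Proof. by rewrite cgE; apply/idP/idP => [/eqP/dvdz_mod0P|/dvdz_mod0P/eqP]. Qed.

Lemma word_eval_cons k l m p w :
  word_eval k l m (p :: w) = wr_mul l m (letter_eval k l m p) (word_eval k l m w).
Proof. by []. Qed.
Lemma let_tau k l m (Hi : (0 < 3)%N) inv :
  cg (emod m) (letter_eval k l m (@Ordinal 3 0 Hi, inv)).1 (if inv then -1 else 1)
  /\ forall x, (letter_eval k l m (@Ordinal 3 0 Hi, inv)).2 x = dih_one.
Proof.
rewrite /letter_eval /gen /=; case: inv => /=; split => //.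
- by rewrite /cg modz_mod modzNm.
- by move=> x; rewrite /dih_inv /= oppr0 mod0z.
- exact: cg_mod.
Qed.

Lemma let_alpha k l m (Hi : (1 < 3)%N) inv :
  (letter_eval k l m (@Ordinal 3 1 Hi, inv)).1 = 0
  /\ forall x, (letter_eval k l m (@Ordinal 3 1 Hi, inv)).2 x =
     if cg (emod m) x 0 then dih_a else dih_one.
Proof.
rewrite /letter_eval /gen /=; case: inv => /=; split => //.
- by rewrite oppr0 mod0z.
- move=> x; rewrite /wr_delta delta_cg addr0.
  by case: (cg _ x 0); rewrite /dih_inv /= ?oppr0 mod0z.
- by move=> x; rewrite /wr_delta delta_cg.
Qed.

Lemma let_beta k l m (Hi : (2 < 3)%N) inv :
  (letter_eval k l m (@Ordinal 3 2 Hi, inv)).1 = 0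
  /\ forall x, (letter_eval k l m (@Ordinal 3 2 Hi, inv)).2 x =
     if cg (emod m) x k%:Z then dih_b l else dih_one.
Proof.
rewrite /letter_eval /gen /=; case: inv => /=; split => //.
- by rewrite oppr0 mod0z.
- move=> x; rewrite /wr_delta delta_cg addr0.
  case: (cg _ x _); rewrite /dih_inv /= ?oppr0 ?mod0z //.
  by rewrite /dih_b modz_mod.
- by move=> x; rewrite /wr_delta delta_cg.
Qed.

Lemma cnt_tau (t : bool) (M y y' : int) (Hi : (0 < 3)%N) inv w :
  cg M y' (y - (if inv then -1 else 1)) ->
  cnt t M y ((@Ordinal 3 0 Hi, inv) :: w) = cnt t M y' w.
Proof.
move=> H; rewrite /cnt /= count_map; apply: eq_count => e /=; congr andb.
rewrite -cg_sub; apply/idP/idP => H2.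
- exact: (cg_trans H H2).
- by apply: (cg_trans _ H2); rewrite cg_sym.
Qed.

Lemma cnt_cons t M y p w c t' :
  evs (p :: w) = (c, t') :: evs w ->
  cnt t M y (p :: w) = (((t' == t) && cg M y c) + cnt t M y w)%N.
Proof. by move=> H; rewrite /cnt H. Qed.

Lemma odd_cnt_ex t M y w : odd (cnt t M y w) -> exists c, (c, t) \in evs w /\ cg M y c.
Proof.
move=> H.
have : has (fun e => (e.2 == t) && cg M y e.1) (evs w).
  by rewrite has_count; move: H; rewrite /cnt; case: count.
by case/hasP => [[c t'] He /= /andP [/eqP Ht Hc]]; exists c; rewrite -Ht.
Qed.

Lemma dih_mul_one l A B :
  dih_mul l dih_one (if A then dih_a else if B then dih_b l else dih_one) =
  (if A then dih_a else if B then dih_b l else dih_one).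
Proof.
rewrite /dih_mul /=; case: A => /=; first by rewrite add0r mod0z.
case: B => /=; last by rewrite add0r mod0z.
by rewrite add0r /dih_b modz_mod.
Qed.

Definition FW (k : nat) l m w (x : int) : dih :=
  if odd (cnt false (emod m) x w) then dih_a
  else if odd (cnt true (emod m) (x - k%:Z) w) then dih_b l else dih_one.

Definition nomix M (k : nat) w := forall c c', (c, false) \in evs w ->
  (c', true) \in evs w -> ~~ cg M (c - k%:Z) c'.

Lemma nomix_cons M k p w : nomix M k (p :: w) -> nomix M k w.
Proof.
move=> H c c' Hc Hc'; case: p H => [[[|[|[|i]]] Hi] inv] //= H.
- pose d : int := (if inv then -1 else 1).
  have := H (c + d) (c' + d) (map_f (fun e => (e.1 + d, e.2)) Hc)
      (map_f (fun e => (e.1 + d, e.2)) Hc').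
  rewrite !cgE.
  by have -> : c + d - k%:Z - (c' + d) = c - k%:Z - c' by ring.
- by apply: H; rewrite in_cons ?Hc ?Hc' orbT.
- by apply: H; rewrite in_cons ?Hc ?Hc' orbT.
Qed.

Lemma evalW k l m w : nomix (emod m) k w ->
  (word_eval k l m w).1 = (tsum w %% emod m)%Z /\
  forall x, (word_eval k l m w).2 x = FW k l m w x.
Proof.
set M := emod m.
elim: w => [|p w IH] Hnm.
  by split => [|x] //=; rewrite ?mod0z.
have [IH1 IH2] := IH (nomix_cons Hnm).
rewrite word_eval_cons.
case: p Hnm => [[[|[|[|i]]] Hi] inv] Hnm //.
- have [Hu Hu2] := let_tau k l m Hi inv.
  split.
    by rewrite /= IH1 modzDmr -modzDml (eqP Hu) modzDml.
  move=> x /=; rewrite Hu2 IH2 dih_mul_one /FW.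
  rewrite (@cnt_tau _ _ _ (x - (letter_eval k l m (Ordinal Hi, inv)).1)); last first.
    move: Hu; rewrite !cgE => Hu.
    have -> : x - (letter_eval k l m (Ordinal Hi, inv)).1 - (x - (if inv then -1 else 1))
      = - ((letter_eval k l m (Ordinal Hi, inv)).1 - (if inv then -1 else 1)) by ring.
    by rewrite rpredN.
  rewrite (@cnt_tau _ _ _ (x - (letter_eval k l m (Ordinal Hi, inv)).1 - k%:Z)) //.
  move: Hu; rewrite !cgE => Hu.
  have -> : x - (letter_eval k l m (Ordinal Hi, inv)).1 - k%:Z - (x - k%:Z - (if inv then -1 else 1))
      = - ((letter_eval k l m (Ordinal Hi, inv)).1 - (if inv then -1 else 1)) by ring.
  by rewrite rpredN.
- have [Hu1 Hu2] := let_alpha k l m Hi inv.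
  split.
    by rewrite /= IH1 Hu1 !add0r modz_mod.
  move=> x /=; rewrite Hu2 Hu1 subr0 IH2 /FW.
  rewrite !(@cnt_cons _ _ _ _ _ 0 false) //=.
  case Hx: (cg M x 0) => /=.
  + have HB : odd (cnt true M (x - k%:Z) w) = false.
      apply/negbTE/negP => /odd_cnt_ex [c' [Hc' Hcg]].
      have := Hnm 0 c' (mem_head _ _); rewrite in_cons Hc' orbT => /(_ isT).
      apply/negP/negPn; apply: (cg_trans _ Hcg).
      move: Hx; rewrite !cgE.
      have -> : 0 - k%:Z - (x - k%:Z) = - (x - 0) by ring.
      by rewrite rpredN.
    rewrite HB; case: (odd (cnt false M x w)) => /=.
      by rewrite /dih_mul /= oppr0 addr0 mod0z.
    by rewrite /dih_mul /= oppr0 addr0 mod0z.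
  + by rewrite dih_mul_one.
- have [Hu1 Hu2] := let_beta k l m Hi inv.
  split.
    by rewrite /= IH1 Hu1 !add0r modz_mod.
  move=> x /=; rewrite Hu2 Hu1 subr0 IH2 /FW.
  rewrite !(@cnt_cons _ _ _ _ _ 0 true) //= cg_sub add0r.
  case Hx: (cg M x k%:Z) => /=.
  + have HA : odd (cnt false M x w) = false.
      apply/negbTE/negP => /odd_cnt_ex [c [Hc Hcg]].
      have := Hnm c 0; rewrite in_cons Hc orbT mem_head => /(_ isT isT).
      apply/negP/negPn; rewrite cg_sub add0r.
      by apply: cg_trans Hx; rewrite cg_sym.
    rewrite HA /=; case: (odd (cnt true M (x - k%:Z) w)) => /=.
      by rewrite /dih_mul /= subrr mod0z.
    by rewrite /dih_mul /= oppr0 addr0 /dih_b modz_mod.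
  + by rewrite dih_mul_one.
Qed.

Definition FG w (x : int) : dih :=
  ((odd (cnt true 0 x w))%:Z, odd (cnt false 0 x w) (+) odd (cnt true 0 x w)).

Lemma evalG w :
  (word_eval 0 (Some 2%N) None w).1 = tsum w /\
  forall x, (word_eval 0 (Some 2%N) None w).2 x = FG w x.
Proof.
elim: w => [|p w IH]; first by split => [|x].
have [IH1 IH2] := IH.
rewrite word_eval_cons.
case: p => [[[|[|[|i]]] Hi] inv] //.
- have [Hu Hu2] := let_tau 0 (Some 2%N) None Hi inv.
  move: Hu; rewrite cg0 => /eqP Hu.
  split.
    by rewrite /= IH1 modz0 Hu.
  move=> x /=; rewrite Hu2 IH2 /FG Hu.
  rewrite !(@cnt_tau _ _ _ (x - (if inv then -1 else 1))) ?cg0 //.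
  by case: (odd _); case: (odd _).
- have [Hu1 Hu2] := let_alpha 0 (Some 2%N) None Hi inv.
  split.
    by rewrite /= IH1 Hu1 !add0r modz0.
  move=> x /=; rewrite Hu2 Hu1 subr0 IH2 /FG.
  rewrite !(@cnt_cons _ _ _ _ _ 0 false) //= cg0.
  case: (x == 0) => /=; rewrite ?oddD /=;
  by case: (odd (cnt true 0 x w)); case: (odd (cnt false 0 x w)).
- have [Hu1 Hu2] := let_beta 0 (Some 2%N) None Hi inv.
  split.
    by rewrite /= IH1 Hu1 !add0r modz0.
  move=> x /=; rewrite Hu2 Hu1 subr0 IH2 /FG.
  rewrite !(@cnt_cons _ _ _ _ _ 0 true) //= cg0.
  case: (x == 0) => /=; rewrite ?oddD /=;
  by case: (odd (cnt true 0 x w)); case: (odd (cnt false 0 x w)).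
Qed.

Section Ar.
Variables (n : nat) (a b t : int) (inv : bool).
Let d : int := if inv then -1 else 1.
Lemma A1 : - n%:Z < a < n%:Z -> - (n.+1)%:Z < a + (if inv then -1 else 1) < (n.+1)%:Z.
Proof. case: inv; lia. Qed.
Lemma A2 : a - b < n%:Z -> a + (if inv then -1 else 1) - (b + (if inv then -1 else 1)) < (n.+1)%:Z.
Proof. case: inv; lia. Qed.
Lemma A3 : - n%:Z <= t <= n%:Z -> - (n.+1)%:Z <= (if inv then -1 else 1) + t <= (n.+1)%:Z.
Proof. case: inv; lia. Qed.
Lemma A4 : - (n.+1)%:Z < 0 < (n.+1)%:Z.
Proof. lia. Qed.
Lemma A5 : - n%:Z < a < n%:Z -> - (n.+1)%:Z < a < (n.+1)%:Z.
Proof. lia. Qed.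
Lemma A6 : 0 - 0 < (n.+1)%:Z.
Proof. lia. Qed.
Lemma A7 : - n%:Z < b < n%:Z -> 0 - b < (n.+1)%:Z.
Proof. lia. Qed.
Lemma A8 : - n%:Z < a < n%:Z -> a - 0 < (n.+1)%:Z.
Proof. lia. Qed.
Lemma A9 : a - b < n%:Z -> a - b < (n.+1)%:Z.
Proof. lia. Qed.
Lemma A10 : - n%:Z <= t <= n%:Z -> - (n.+1)%:Z <= 0 + t <= (n.+1)%:Z.
Proof. lia. Qed.
End Ar.

Lemma evs_win w :
  (forall e : int * bool, e \in evs w -> - (size w)%:Z < e.1 < (size w)%:Z) /\
  (forall e e' : int * bool, e \in evs w -> e' \in evs w -> e.1 - e'.1 < (size w)%:Z) /\
  (- (size w)%:Z <= tsum w <= (size w)%:Z).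
Proof.
elim: w => [|p w [IH1 [IH2 IH3]]]; first by [].
case: p => [[[|[|[|i]]] Hi] inv] //=.
- split; [|split].
  + move=> e /mapP [e0 He0 ->] /=; exact: A1 (IH1 _ He0).
  + move=> e e' /mapP [e0 He0 ->] /mapP [e1 He1 ->] /=.
    exact: A2 (IH2 _ _ He0 He1).
  + exact: A3.
- split; [|split].
  + move=> e; rewrite in_cons => /orP [/eqP ->|He].
    * exact: A4.
    * exact: A5 (IH1 _ He).
  + move=> e e'; rewrite !in_cons => /orP [/eqP ->|He] /orP [/eqP ->|He'] /=.
    * exact: A6.
    * exact: A7 (IH1 _ He').
    * exact: A8 (IH1 _ He).
    * exact: A9 (IH2 _ _ He He').
  + exact: A10.
- split; [|split].
  + move=> e; rewrite in_cons => /orP [/eqP ->|He].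
    * exact: A4.
    * exact: A5 (IH1 _ He).
  + move=> e e'; rewrite !in_cons => /orP [/eqP ->|He] /orP [/eqP ->|He'] /=.
    * exact: A6.
    * exact: A7 (IH1 _ He').
    * exact: A8 (IH1 _ He).
    * exact: A9 (IH2 _ _ He He').
  + exact: A10.
Qed.

Lemma core k l m w : (if m is Some n then (2 * k < n)%N else true) ->
  (size w < k)%N -> (W k l m w <-> Gamma0 w).
Proof.
move=> hkm hw.
have [Hw1 [Hw2 Hw3]] := evs_win w.
set M := emod m.
have small : forall z : int, z != 0 -> - (2 * k)%:Z < z < (2 * k)%:Z -> ~~ (M %| z)%Z.
  move=> z nz hz; rewrite /M; case: m hkm {M} => [n0|] /= hkm; apply/negP; rewrite dvdzE => H.
  - have hz0 : (0 < `|z|)%N by lia.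
    have := dvdn_leq hz0 H; lia.
  - rewrite dvd0n in H; lia.
have cgM : forall c c' : int, c - c' < (size w)%:Z -> c' - c < (size w)%:Z -> cg M c c' = (c == c').
  move=> c c' h1 h2; case: (eqVneq c c') => [->|ne]; first by rewrite cg_refl.
  rewrite cgE; apply/negbTE/small; first by rewrite subr_eq0.
  lia.
have Hnm : nomix M k w.
  move=> c c' Hc Hc'; rewrite cgE; apply: small.
    have := Hw2 _ _ Hc Hc'; have := Hw2 _ _ Hc' Hc => /= h1 h2; lia.
  have := Hw2 _ _ Hc Hc'; have := Hw2 _ _ Hc' Hc => /= h1 h2; lia.
have [E1 E2] := evalW l Hnm.
have [G1 G2] := evalG w.
have trW : W k l m w <-> ((tsum w %% M)%Z = 0 /\
    forall x, ~~ odd (cnt false M x w) /\ ~~ odd (cnt true M (x - k%:Z) w)).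
  rewrite /W /wr_trivial E1 modz_mod; split => [[h1 h2]|[h1 h2]]; split => // x.
  - have := h2 x; rewrite E2 /FW /dih_trivial.
    case: (odd (cnt false M x w)) => /=; first by move=> [_].
    by case: (odd (cnt true M (x - k%:Z) w)) => /= [[_]|].
  - rewrite E2 /FW; have [/negbTE -> /negbTE ->] := h2 x.
    by rewrite /dih_trivial /= mod0z.
have trG : Gamma0 w <-> (tsum w = 0 /\
    forall x, ~~ odd (cnt false 0 x w) /\ ~~ odd (cnt true 0 x w)).
  rewrite /Gamma0 /W /wr_trivial G1 /= modz0; split => [[h1 h2]|[h1 h2]]; split => // x.
  - have := h2 x; rewrite G2 /FG /dih_trivial /=.
    by case: (odd (cnt false 0 x w)); case: (odd (cnt true 0 x w)) => /=; case.
  - rewrite G2 /FG; have [/negbTE -> /negbTE ->] := h2 x.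
    by rewrite /dih_trivial /=.
have key : forall t, (forall y, ~~ odd (cnt t M y w)) <-> (forall y, ~~ odd (cnt t 0 y w)).
  move=> t; split=> H y; apply/negP => Hodd.
  - have [c [Hc Hcy]] := odd_cnt_ex Hodd.
    move: Hcy; rewrite cg0 => /eqP Hyc; subst y.
    have : cnt t M c w = cnt t 0 c w.
      rewrite /cnt; apply: eq_in_count => e He /=; congr andb.
      rewrite cg0 cgM //.
        exact: (Hw2 (c, t) e Hc He).
      exact: (Hw2 e (c, t) He Hc).
    by move=> Hcc; move: (H c); rewrite Hcc Hodd.
  - have [c [Hc Hcy]] := odd_cnt_ex Hodd.
    have : cnt t M y w = cnt t 0 c w.
      rewrite /cnt; apply: eq_in_count => e He /=; congr andb.
      rewrite cg0 -cgM.
      + apply/idP/idP => h; last exact: (cg_trans Hcy h).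
        by apply: (cg_trans _ h); rewrite cg_sym.
      + exact: (Hw2 (c, t) e Hc He).
      + exact: (Hw2 e (c, t) He Hc).
    by move=> Hcc; move: (H c); rewrite -Hcc Hodd.
rewrite trW trG; split => [[h1 h2]|[h1 h2]]; split.
- apply/eqP; apply: contraT => nz.
  have := small _ nz; rewrite -/M; move/dvdz_mod0P: h1 => ->.
  by move=> /(_ _); apply; lia.
- move=> x; split.
    by apply: (key false).1 x => y; case: (h2 y).
  apply: (key true).1 x => y; have [_] := h2 (y + k%:Z).
  by rewrite addrK.
- by rewrite h1 mod0z.
- move=> x; split.
    by apply: (key false).2 x => y; case: (h2 y).
  by apply: (key true).2 (x - k%:Z) => y; case: (h2 y).
Qed.

Theorem lemma2p3 (k : nat -> nat) (l m : nat -> extnat)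
  (hl : forall s, if l s is Some n then (2 <= n)%N else true)
  (hm : forall s, if m s is Some n then (1 <= n)%N else true)
  (hkm : forall s, if m s is Some n then (2 * k s < n)%N else true) :
  (forall (F : realFieldType) (R : F),
     (forall s, R < ((k s)%:R - 1) / 2) ->
     forall w : word, (size w)%:R <= 2 * R ->
       (Delta k l m w <-> Gamma0 w))
  /\ ((forall N : nat, exists s, (N < k s)%N) ->
      marked_quotient Gamma0 (Delta k l m)).
Proof.
have sizek : forall w s, (size w < k s)%N -> (W (k s) (l s) (m s) w <-> Gamma0 w).
  by move=> w s h; apply: (@core (k s) (l s) (m s) w (hkm s) h).
split.
- move=> F R hR w hw.
  have hs : forall s, (size w < k s)%N.
    move=> s; have h := hR s.
    have : (size w)%:R + 1 < (k s)%:R :> F by lra.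
    by rewrite natr1 ltr_nat => /ltnW.
  split => [HD|HG]; first exact: (sizek w 0%N (hs 0%N)).1 (HD 0%N).
  by move=> s; exact: (sizek w s (hs s)).2 HG.
- move=> Hunb w HD; have [s hs] := Hunb (size w).
  exact: (sizek w s hs).1 (HD s).
Qed.
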